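(* In the setting below, suppose the step size satisfies $0<\eta\le \frac{1}{L(K+1)}$. Then for every $k\ge 0$ the iterates of the PIAG method satisfy \[ F_{k+1}\le F_k-\frac{1}{2}\eta\|d_k\|^2+\eta^2\frac{L}{2}\sum_{j=(k-K)_+}^{k-1}\|d_j\|^2 . \]
   Context: Let $m,n\ge 1$ be integers and $\|\cdot\|$ the Euclidean norm on $\mathbb{R}^n$. For $i=1,\dots,m$, let $f_i:\mathbb{R}^n\to\mathbb{R}$ be continuously differentiable with $\|\nabla f_i(x)-\nabla f_i(y)\|\le L_i\|x-y\|$ for all $x,y$, where $L_i\ge 0$ (the $f_i$ are not assumed convex). Let $f=\frac1m\sum_{i=1}^m f_i$ and $L=\frac1m\sum_{i=1}^m L_i$. Assume $f$ is $\mu$-strongly convex for some $\mu>0$ (i.e. $x\mapsto f(x)-\frac{\mu}{2}\|x\|^2$ is convex). Let $r:\mathbb{R}^n\to(-\infty,\infty]$ be proper, closed and convex, let $F=f+r$, and let $x^*$ be the unique minimizer of $F$. For $\eta>0$ define $\mathrm{prox}_r^\eta(y)=\arg\min_{x\in\mathbb{R}^n}\{\frac12\|x-y\|^2+\eta r(x)\}$. PIAG method: fix an integer $K\ge 0$, a step size $\eta>0$ and $x_0\in\mathbb{R}^n$; for each $k\ge0$ and each $i$ let $\tau_{i,k}$ be any (deterministically chosen) integer with $\max(k-K,0)\le\tau_{i,k}\le k$; set $g_k=\frac1m\sum_{i=1}^m\nabla f_i(x_{\tau_{i,k}})$ and $x_{k+1}=\mathrm{prox}_r^\eta(x_k-\eta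 g_k)$. Define $d_k=(x_{k+1}-x_k)/\eta$ (equivalently $d_k=-g_k-h_{k+1}$, where $h_{k+1}\in\partial r(x_{k+1})$ is given by the optimality condition of the proximal step), and $F_k=F(x_k)-F(x^* )$. Write $(t)_+=\max(t,0)$; empty sums are zero. *)

(* Defs.v *)
From HB Require Import structures.
From mathcomp Require Import all_boot all_order all_algebra.
From mathcomp Require Import all_classical all_reals all_analysis.
Set Implicit Arguments. Unset Strict Implicit. Unset Printing Implicit Defensive.
Import Order.TTheory GRing.Theory Num.Theory.
Import numFieldNormedType.Exports.
Local Open Scope ring_scope.

Section PIAGDefs.
Variables (R : realType) (n : nat).
Local Notation V := 'rV[R]_n.

Definition dotp (u v : V) : R := \sum_(i < n) u ord0 i * v ord0 i.
Definition enorm (u : V) : R := Num.sqrt (dotp u u).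

Definition has_gradient (f : V -> R) (g : V -> V) : Prop :=
  forall x, differentiable f x /\ ('d f x : V -> R) = (fun h => dotp (g x) h).

Definition lipschitz_grad (g : V -> V) (Lc : R) : Prop :=
  forall x y, enorm (g x - g y) <= Lc * enorm (x - y).

Definition convex_fun (h : V -> R) : Prop :=
  forall (x y : V) (t : R), 0 <= t <= 1 ->
    h (t *: x + (1 - t) *: y) <= t * h x + (1 - t) * h y.

Definition strongly_convex (h : V -> R) (mu : R) : Prop :=
  convex_fun (fun x => h x - mu / 2 * enorm x ^+ 2).

Definition proper_fun (r : V -> \bar R) : Prop :=
  (forall x, (-oo < r x)%E) /\ (exists x, (r x < +oo)%E).

Definition closed_fun (r : V -> \bar R) : Prop :=
  forall x (a : R), (a%:E < r x)%E -> \forall y \near x, (a%:E < r y)%E.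

Definition convex_efun (r : V -> \bar R) : Prop :=
  forall (x y : V) (t : R), 0 <= t <= 1 ->
    (r ((t *: x + (1 - t) *: y)%R) <= t%:E * r x + (1 - t)%:E * r y)%E.

Definition is_prox (r : V -> \bar R) (eta : R) (y p : V) : Prop :=
  forall z, ((enorm (p - y) ^+ 2 / 2)%:E + eta%:E * r p <=
             (enorm (z - y) ^+ 2 / 2)%:E + eta%:E * r z)%E.

End PIAGDefs.

(* Main.v *)
Require Import Defs.
From HB Require Import structures.
From mathcomp Require Import all_boot all_order all_algebra.
From mathcomp Require Import all_classical all_reals all_analysis.
From mathcomp Require Import ring lra.
Import Order.TTheory GRing.Theory Num.Theory.
Import numFieldNormedType.Exports.
Local Open Scope ring_scope.

Section Aux.
Variables (R : realType) (n : nat).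
Local Notation V := 'rV[R]_n.
Implicit Types u v w : V.

Lemma dotpC u v : dotp u v = dotp v u.
Proof. by apply: eq_bigr => i _; rewrite mulrC. Qed.

Lemma dotpDl u v w : dotp (u + v) w = dotp u w + dotp v w.
Proof. by rewrite /dotp -big_split; apply: eq_bigr => i _; rewrite !mxE mulrDl. Qed.

Lemma dotpZl a u v : dotp (a *: u) v = a * dotp u v.
Proof. by rewrite /dotp mulr_sumr; apply: eq_bigr => i _; rewrite !mxE mulrA. Qed.

Lemma dotpNl u v : dotp (- u) v = - dotp u v.
Proof. by rewrite -scaleN1r dotpZl mulN1r. Qed.

Lemma dotpBl u v w : dotp (u - v) w = dotp u w - dotp v w.
Proof. by rewrite dotpDl dotpNl. Qed.

Lemma dotpDr u v w : dotp w (u + v) = dotp w u + dotp w v.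
Proof. by rewrite dotpC dotpDl !(dotpC w). Qed.
Lemma dotpZr a u v : dotp v (a *: u) = a * dotp v u.
Proof. by rewrite dotpC dotpZl dotpC. Qed.
Lemma dotpBr u v w : dotp w (u - v) = dotp w u - dotp w v.
Proof. by rewrite dotpC dotpBl !(dotpC w). Qed.
Lemma dotpNr u v : dotp v (- u) = - dotp v u.
Proof. by rewrite dotpC dotpNl dotpC. Qed.

Lemma dotp0l v : dotp 0 v = 0.
Proof. by rewrite -(scale0r 0) dotpZl mul0r. Qed.

Lemma dotp_suml (I : finType) (F : I -> V) v :
  dotp (\sum_(i : I) F i) v = \sum_(i : I) dotp (F i) v.
Proof.
rewrite /dotp exchange_big /=; apply: eq_bigr => j _.
by rewrite summxE mulr_suml.
Qed.

Lemma dotpp_ge0 u : 0 <= dotp u u.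
Proof. by apply: sumr_ge0 => i _; rewrite -expr2 sqr_ge0. Qed.

Lemma enorm_ge0 u : 0 <= enorm u.
Proof. exact: sqrtr_ge0. Qed.

Lemma enorm_sq u : enorm u ^+ 2 = dotp u u.
Proof. by rewrite /enorm sqr_sqrtr // dotpp_ge0. Qed.

Lemma dotpp_eq0 u : dotp u u = 0 -> u = 0.
Proof.
move=> h; apply/matrixP => i j; rewrite mxE (ord1 i).
have := @psumr_eq0P R 'I_n xpredT (fun k => u ord0 k * u ord0 k).
move=> /(_ (fun k _ => ltac:(by rewrite -expr2 sqr_ge0)) h j isT) /eqP.
by rewrite mulf_eq0 orbb => /eqP.
Qed.

Lemma CS u v : dotp u v <= enorm u * enorm v.
Proof.
have [v0|vn0] := eqVneq v 0.
  by rewrite v0 dotpC dotp0l mulr_ge0 ?enorm_ge0.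
have b2 : 0 < dotp v v.
  rewrite lt_def dotpp_ge0 andbT; apply/negP => /eqP/dotpp_eq0 h.
  by rewrite h eqxx in vn0.
set p := dotp u v.
have H := dotpp_ge0 (u - (p / dotp v v) *: v).
rewrite !(dotpBl, dotpBr, dotpZl, dotpZr) (dotpC v u) -/p in H.
have H2 : p ^+ 2 <= dotp u u * dotp v v.
  set q := dotp v v in H b2 *; set a := dotp u u in H *.
  set t := p / q in H.
  have pt : p = t * q by rewrite /t divfK // gt_eqF.
  rewrite pt in H *; nra.
have H3 : p ^+ 2 <= (enorm u * enorm v) ^+ 2 by rewrite exprMn !enorm_sq.
have c0 : 0 <= enorm u * enorm v by rewrite mulr_ge0 ?enorm_ge0.
have [p0|p0] := lerP p 0; first exact: le_trans p0 c0.
by rewrite -ler_sqr ?nnegrE // ltW.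
Qed.

Lemma enormD u v : enorm (u + v) <= enorm u + enorm v.
Proof.
rewrite {1}/enorm -(ger0_norm (addr_ge0 (enorm_ge0 u) (enorm_ge0 v))) -sqrtr_sqr.
rewrite ler_sqrt ?sqr_ge0 // sqrrD !enorm_sq dotpDl !dotpDr (dotpC v u).
have := CS u v; lra.
Qed.

Lemma enormZ a u : enorm (a *: u) = `|a| * enorm u.
Proof.
by rewrite /enorm dotpZl dotpZr mulrA -expr2 sqrtrM ?sqr_ge0 // sqrtr_sqr.
Qed.

Lemma enormN u : enorm (- u) = enorm u.
Proof. by rewrite -scaleN1r enormZ normrN normr1 mul1r. Qed.

Lemma enorm_sum (F : nat -> V) a b :
  enorm (\sum_(a <= j < b) F j) <= \sum_(a <= j < b) enorm (F j).
Proof.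
elim/big_ind2: _ => //.
  by rewrite /enorm /dotp big1 ?sqrtr0 // => i _; rewrite mxE mul0r.
by move=> x1 x2 y1 y2 h1 h2; apply: le_trans (enormD _ _) (lerD h1 h2).
Qed.


Lemma psi_deriv (f : V -> R) (g : V -> V) (x h : V) (t : R) :
  has_gradient f g ->
  derivable (fun s : R => f (x + s *: h)) t 1 /\
  'D_1 (fun s : R => f (x + s *: h)) t = dotp (g (x + t *: h)) h.
Proof.
move=> hg.
have e : (fun s : R => s^-1 *: ((fun s : R => f (x + s *: h)) (s *: 1 + t)
             - (fun s : R => f (x + s *: h)) t)) =
         (fun s : R => s^-1 *: (f (s *: h + (x + t *: h)) - f (x + t *: h))).
  apply/funext => s /=; congr (_ *: (f _ - _)).
  by rewrite [s%:A]mulr1 scalerDl addrCA addrC.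
have [dif dd] := hg (x + t *: h).
split.
  have := @diff_derivable _ _ _ f _ h dif; rewrite /derivable e; exact.
rewrite /derive e -/(derive f (x + t *: h) h) deriveE // dd //.
Qed.


Lemma descent (f : V -> R) (g : V -> V) (Lc : R) :
  has_gradient f g -> lipschitz_grad g Lc -> forall x y,
  f y <= f x + dotp (g x) (y - x) + Lc / 2 * enorm (y - x) ^+ 2.
Proof.
move=> hg hl x y.
set h := y - x; set c := dotp (g x) h; set q := Lc / 2 * enorm h ^+ 2.
pose psi := fun s : R => f (x + s *: h).
pose p : {poly R} := c *: 'X + q *: 'X^2.
pose phi := psi - horner p.
have dphi t : derivable phi t 1 /\
    'D_1 phi t = dotp (g (x + t *: h)) h - (c + q * (2 * t)).
  have [d1 e1] := psi_deriv f g x h t hg.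
  have d2 : derivable (horner p) t 1 by exact: derivable_horner.
  split; first exact: derivableB.
  rewrite deriveB // e1 (@derive_val _ _ _ _ _ _ _ (is_derive_poly p t)).
  congr (_ - _).
  rewrite /p derivD !derivZ derivX derivXn /= !hornerE /=.
  by ring.
have cont := @derivable_within_continuous _ _ phi `[0, 1] (fun s _ => (dphi s).1).
have dle : forall s, s \in `]0, 1[ -> derive1 phi s <= 0.
  move=> s; rewrite in_itv /= => /andP[s0 s1].
  rewrite derive1E (dphi s).2.
  have hL := hl (x + s *: h) x.
  rewrite [x + s *: h - x]addrC addKr enormZ (ger0_norm (ltW s0)) in hL.
  have := CS (g (x + s *: h) - g x) h; rewrite dotpBl -/c.
  have H2 := ler_wpM2r (enorm_ge0 h) hL.
  move=> H1; have := le_trans H1 H2; rewrite /q; nra.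
have := ler0_derive1_le_cc (fun s _ => (dphi s).1) dle cont.
move=> /(_ 1 0); rewrite !in_itv /= ler01 !lexx /= => /(_ isT isT isT).
have -> : phi 1 = f y - (c + q).
  change (f (x + 1 *: h) - p.[1] = f y - (c + q)).
  have -> : x + 1 *: h = y by rewrite scale1r /h addrC subrK.
  rewrite /p !hornerE /=; ring.
have -> : phi 0 = f x.
  change (f (x + 0 *: h) - p.[0] = f x).
  rewrite /p !hornerE /= scale0r addr0; ring.
lra.
Qed.


Lemma prox_ineq (r : V -> \bar R) (eta : R) (y p z : V) (rp rz : R) :
  0 < eta -> convex_efun r -> is_prox r eta y p -> r p = rp%:E -> r z = rz%:E ->
  eta * rp <= eta * rz + dotp (p - y) (z - p).
Proof.
move=> he hc hp erp erz.
set D := dotp (p - y) (z - p); set N := dotp (z - p) (z - p).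
have N0 : 0 <= N by exact: dotpp_ge0.
have Ht : forall t, 0 < t <= 1 -> eta * rp <= eta * rz + D + t * N / 2.
  move=> t /andP[t0 t1].
  have hct := hc z p t; rewrite ltW //= t1 in hct.
  have := hct isT; rewrite erp erz -!EFinM -EFinD => hct'.
  have := hp (t *: z + (1 - t) *: p).
  move=> /le_trans /(_ (leeD2l _ (lee_wpmul2l (ltW he : (0 <= eta%:E)%E) hct'))).
  rewrite erp -!EFinM -!EFinD lee_fin.
  have -> : t *: z + (1 - t) *: p - y = (p - y) + t *: (z - p).
    by apply/matrixP => i j; rewrite !mxE; ring.
  rewrite /D /N; move: (p - y) (z - p) => a b.
  rewrite !enorm_sq dotpDl !dotpDr !dotpZl !dotpZr (dotpC b a).
  move=> H.
  rewrite -(ler_pM2l t0); nra.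
apply/ler_addgt0Pr => e e0.
have tpos : 0 < e / (e + N + 1) by rewrite divr_gt0 //; lra.
have t1 : e / (e + N + 1) <= 1 by rewrite ler_pdivrMr; lra.
have := Ht _ (introT andP (conj tpos t1)).
have : e / (e + N + 1) * N <= e.
  by rewrite mulrAC ler_pdivrMr; [nra | lra].
lra.
Qed.


Lemma sum_mul_le (e : nat -> R) (a : R) (lo hi K : nat) :
  (hi - lo <= K)%N -> 0 <= a ->
  (\sum_(lo <= j < hi) e j) * a <= (K%:R * a ^+ 2 + \sum_(lo <= j < hi) e j ^+ 2) / 2.
Proof.
move=> hK a0.
rewrite mulr_suml.
apply: (@le_trans _ _ (\sum_(lo <= j < hi) ((a ^+ 2 + e j ^+ 2) / 2))).
  by apply: ler_sum => j _; have := sqr_ge0 (a - e j); nra.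
rewrite -mulr_suml big_split /= sumr_const_nat ler_pM2r // lerD2r.
rewrite -[_ *+ (hi - lo)]mulr_natl ler_wpM2r ?sqr_ge0 // ler_nat //.
Qed.

Lemma per_i (fi : V -> R) (gi : V -> V) (Lc : R) (x : nat -> V) (k K tau : nat) :
  has_gradient fi gi -> lipschitz_grad gi Lc -> 0 <= Lc -> (k - K <= tau <= k)%N ->
  fi (x k.+1) <= fi (x k) + dotp (gi (x tau)) (x k.+1 - x k)
    + Lc * (((K.+1)%:R * enorm (x k.+1 - x k) ^+ 2
             + \sum_(k - K <= j < k) enorm (x j.+1 - x j) ^+ 2) / 2).
Proof.
move=> hg hl L0 /andP[htl htk].
have hd := @descent fi gi Lc hg hl (x k) (x k.+1).
set Dl := x k.+1 - x k in hd *.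
have hs : dotp (gi (x k)) Dl = dotp (gi (x tau)) Dl + dotp (gi (x k) - gi (x tau)) Dl.
  by rewrite dotpBl addrC subrK.
have h1 : dotp (gi (x k) - gi (x tau)) Dl <= Lc * enorm (x k - x tau) * enorm Dl.
  exact: le_trans (CS _ _) (ler_wpM2r (enorm_ge0 _) (hl _ _)).
have h2 : enorm (x k - x tau) <= \sum_(k - K <= j < k) enorm (x j.+1 - x j).
  rewrite -(telescope_sumr _ htk); apply: le_trans (enorm_sum _ _ _) _.
  rewrite (@big_cat_nat _ _ _ tau (k - K) k _ _ htl htk) /= lerDr.
  by apply: sumr_ge0 => j _; exact: enorm_ge0.
have hK : (k - (k - K) <= K)%N by rewrite leq_subLR addnC -leq_subLR.
have h3 := @sum_mul_le (fun j => enorm (x j.+1 - x j)) (enorm Dl) _ _ _ hK (enorm_ge0 Dl).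
have h4 : Lc * enorm (x k - x tau) * enorm Dl <=
    Lc * ((K%:R * enorm Dl ^+ 2 + \sum_(k - K <= j < k) enorm (x j.+1 - x j) ^+ 2) / 2).
  by rewrite -mulrA ler_wpM2l //; apply: le_trans (ler_wpM2r (enorm_ge0 _) h2) h3.
have -> : (K.+1)%:R = K%:R + 1 :> R by rewrite -addn1 natrD.
rewrite hs in hd.
nra.
Qed.

End Aux.

Theorem lemma1 (R : realType) (m n : nat) (hm : (0 < m)%N)
  (f : 'I_m -> 'rV[R]_n -> R) (gradf : 'I_m -> 'rV[R]_n -> 'rV[R]_n)
  (Li : 'I_m -> R)
  (hgrad : forall i, has_gradient (f i) (gradf i))
  (hcont : forall i, continuous (gradf i))
  (hLi : forall i, 0 <= Li i)
  (hlip : forall i, lipschitz_grad (gradf i) (Li i))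
  (mu : R) (hmu : 0 < mu)
  (hsc : strongly_convex (fun x => (m%:R)^-1 * \sum_(i < m) f i x) mu)
  (r : 'rV[R]_n -> \bar R)
  (hrp : proper_fun r) (hrc : closed_fun r) (hrv : convex_efun r)
  (xstar : 'rV[R]_n)
  (hxstar : forall x, (((m%:R)^-1 * \sum_(i < m) f i xstar)%:E + r xstar
                       <= ((m%:R)^-1 * \sum_(i < m) f i x)%:E + r x)%E)
  (K : nat) (eta : R) (x : nat -> 'rV[R]_n) (tau : nat -> 'I_m -> nat)
  (htau : forall k i, (k - K <= tau k i <= k)%N)
  (heta : 0 < eta) (heta2 : eta * (((m%:R)^-1 * \sum_(i < m) Li i) * (K.+1)%:R) <= 1)
  (hiter : forall k, is_prox r eta
             (x k - eta *: ((m%:R)^-1 *: \sum_(i < m) gradf i (x (tau k i))))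
             (x k.+1))
  (k : nat) :
  let F := fun y => (((m%:R)^-1 * \sum_(i < m) f i y)%:E + r y)%E in
  let L := (m%:R)^-1 * \sum_(i < m) Li i in
  let d := fun j => eta^-1 *: (x j.+1 - x j) in
  (F (x k.+1) - F xstar <=
     F (x k) - F xstar - (eta * enorm (d k) ^+ 2 / 2)%:E
     + (eta ^+ 2 * L / 2 * \sum_(k - K <= j < k) enorm (d j) ^+ 2)%:E)%E.
Proof.
cbv zeta.
have [hrpl [z0 hz0]] := hrp.
have hfin v : (r v < +oo)%E -> exists a, r v = a%:E.
  by move: (hrpl v); case: (r v) => // a _ _; exists a.
have [a0 E0] := hfin z0 hz0.
have etaE : (0 < eta%:E)%E by rewrite lte_fin.
have [rp Ep] : exists rp, r (x k.+1) = rp%:E.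
  apply: hfin; move: (hiter k z0); rewrite /is_prox E0; case: (r (x k.+1)) => [a| |] //; first by rewrite ltry.
  by rewrite gt0_muley.
have [rs Es] : exists rs, r xstar = rs%:E.
  apply: hfin; have := hxstar z0; rewrite E0; case: (r xstar) => [a| |] //; first by rewrite ltry.
case Ek: (r (x k)) => [rk| |]; last by move: (hrpl (x k)); rewrite Ek.
  rewrite Es Ep -!(EFinD, EFinB, EFinN) lee_fin.
  set mi := m%:R^-1 in heta2 hiter *.
  have mi0 : 0 < mi by rewrite invr_gt0 ltr0n.
  set Lb := mi * \sum_(i < m) Li i in heta2 *.
  set Dl := x k.+1 - x k.
  set S2 := \sum_(k - K <= j < k) enorm (x j.+1 - x j) ^+ 2.
  set A := enorm Dl ^+ 2.
  set g := mi *: \sum_(i < m) gradf i (x (tau k i)) in hiter *.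
  set G := dotp g Dl.
  have hD : mi * \sum_(i < m) f i (x k.+1) <=
      mi * \sum_(i < m) f i (x k) + G + Lb * (((K.+1)%:R * A + S2) / 2).
    rewrite /G /g dotpZl dotp_suml /Lb -mulrA -!mulrDr ler_pM2l // mulr_suml -!big_split.
    apply: ler_sum => i _.
    exact: (@per_i _ _ (f i) (gradf i) (Li i) x k K (tau k i) (hgrad i) (hlip i) (hLi i) (htau k i)).
  have hP : eta * rp <= eta * rk - A - eta * G.
    have := @prox_ineq _ _ r eta (x k - eta *: g) (x k.+1) (x k) rp rk heta hrv (hiter k) Ep Ek.
    have -> : x k.+1 - (x k - eta *: g) = Dl + eta *: g.
      by apply/matrixP => a b; rewrite !mxE; ring.
    have -> : x k - x k.+1 = - Dl by rewrite /Dl opprB.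
    rewrite dotpNr dotpDl dotpZl -enorm_sq -/A -/G; lra.
  have ie0 : 0 <= eta^-1 by rewrite invr_ge0 ltW.
  have e1 : enorm (eta^-1 *: Dl) ^+ 2 = eta^-1 ^+ 2 * A.
    by rewrite enormZ exprMn ger0_norm.
  have e2 : \sum_(k - K <= j < k) enorm (eta^-1 *: (x j.+1 - x j)) ^+ 2 = eta^-1 ^+ 2 * S2.
    by rewrite /S2 mulr_sumr; apply: eq_bigr => j _; rewrite enormZ exprMn ger0_norm.
  rewrite e1 e2.
  set B := A / eta.
  have AE : A = eta * B by rewrite /B mulrC divfK // gt_eqF.
  have t1 : eta * (eta^-1 ^+ 2 * A) / 2 = B / 2 by rewrite /B; field; rewrite gt_eqF.
  have t2 : eta ^+ 2 * Lb / 2 * (eta^-1 ^+ 2 * S2) = Lb * S2 / 2 by field; rewrite gt_eqF.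
  rewrite t1 t2.
  have B0 : 0 <= B by apply: divr_ge0; [exact: sqr_ge0 | exact: ltW].
  have hP' : rp <= rk - B - G.
    rewrite -(ler_pM2l heta) !mulrBr -AE; lra.
  have hh : eta * (Lb * (K.+1)%:R) * B <= B by rewrite ler_piMl.
  rewrite AE in hD.
  nra.
by rewrite Es Ep addey // !addye // leey.
Qed.
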